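(* Let $\mathcal H=L^2(S^1,\mathbb C^{N+1})$ and let $\mathcal H_+\subset\mathcal H$ be the subspace of boundary values of holomorphic maps $\{|z|<1\}\to\mathbb C^{N+1}$ (the vector-valued Hardy space). Let $\mathbb P\subset\mathcal H$ be a closed subspace such that $z^{-1}\mathbb P\subset\mathbb P$ and $\mathbb P\oplus\mathcal H_+=\mathcal H$ (direct sum, not necessarily orthogonal). Then $\bigcup_{n\ge0}z^n\mathbb P$ is dense in $\mathcal H$.
   Context: Here $z$ denotes the coordinate function on $S^1=\{|z|=1\}$, acting on $\mathcal H$ by multiplication. *)

(* Defs.v *)
(* H = L^2(S^1, C^(N+1)) is modelled, via the Fourier
   transform (Plancherel), as l^2(Z, C^(N+1)): an element is its sequence of
   Fourier coefficients f k j (k : Z frequency, j < N+1 component). *)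
From Stdlib Require Import Reals ZArith.
Open Scope R_scope.

Definition C := (R * R)%type.
Definition C0 : C := (0, 0).
Definition Cadd (a b : C) : C := (fst a + fst b, snd a + snd b).
Definition Copp (a : C) : C := (- fst a, - snd a).
Definition Cmul (a b : C) : C :=
  (fst a * fst b - snd a * snd b, fst a * snd b + snd a * fst b).
Definition Cnorm2 (a : C) : R := fst a * fst a + snd a * snd a.

Definition seqC := Z -> nat -> C.

Definition energy (N : nat) (f : seqC) (M : nat) : R :=
  sum_f_R0 (fun i => sum_f_R0 (fun j => Cnorm2 (f (Z.of_nat i - Z.of_nat M)%Z j)) N)
           (2 * M).

Definition in_H (N : nat) (f : seqC) : Prop :=
  (forall k j, (N < j)%nat -> f k j = C0) /\
  exists B : R, forall M, energy N f M <= B.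

Definition sub (f g : seqC) : seqC := fun k j => Cadd (f k j) (Copp (g k j)).

Definition dist_le (N : nat) (f g : seqC) (eps : R) : Prop :=
  forall M, energy N (sub f g) M <= eps * eps.

(* H_+ : boundary values of holomorphic maps = nonnegative frequencies *)
Definition Hplus (N : nat) (f : seqC) : Prop :=
  in_H N f /\ forall k j, (k < 0)%Z -> f k j = C0.

Definition is_subspace (N : nat) (P : seqC -> Prop) : Prop :=
  (forall f, P f -> in_H N f) /\
  P (fun _ _ => C0) /\
  (forall f g, P f -> P g -> P (fun k j => Cadd (f k j) (g k j))) /\
  (forall (c : C) f, P f -> P (fun k j => Cmul c (f k j))).

Definition is_closed (N : nat) (P : seqC -> Prop) : Prop :=
  forall f, in_H N f ->
    (forall eps, 0 < eps -> exists g, P g /\ dist_le N f g eps) -> P f.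

(* multiplication by z^n (n : Z) shifts Fourier coefficients by n *)
Definition zpow_mul (n : Z) (f : seqC) : seqC := fun k j => f (k - n)%Z j.

Definition direct_sum_H (N : nat) (P : seqC -> Prop) : Prop :=
  (forall f, P f -> Hplus N f -> forall k j, f k j = C0) /\
  (forall f, in_H N f -> exists p h, P p /\ Hplus N h /\
        forall k j, f k j = Cadd (p k j) (h k j)).

Definition dense_in_H (N : nat) (S : seqC -> Prop) : Prop :=
  forall f, in_H N f -> forall eps, 0 < eps -> exists g, S g /\ dist_le N f g eps.

(* Main.v *)
Require Import Defs.
From Stdlib Require Import Reals ZArith Lra Lia List.
From Stdlib Require Import ClassicalEpsilon FunctionalExtensionality Classical.
Open Scope R_scope.


Definition vadd (f g : seqC) : seqC := fun k j => Cadd (f k j) (g k j).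
Definition vscal (c : Defs.C) (f : seqC) : seqC := fun k j => Cmul c (f k j).
Definition vzero : seqC := fun _ _ => C0.

Definition cc (N : nat) (f : seqC) (k : Z) : R :=
  sum_f_R0 (fun j => Cnorm2 (f k j)) N.
Definition shell (N : nat) (f : seqC) (m : nat) : R :=
  match m with O => cc N f 0%Z | S _ => cc N f (- Z.of_nat m)%Z + cc N f (Z.of_nat m) end.
Definition EE (N : nat) (f : seqC) (M : nat) : R := sum_f_R0 (shell N f) M.
Definition bnd (N : nat) (f : seqC) (B : R) : Prop := forall M, energy N f M <= B.

Lemma Cnorm2_nonneg a : 0 <= Cnorm2 a.
Proof. destruct a; unfold Cnorm2; simpl; nra. Qed.

Lemma cc_nonneg N f k : 0 <= cc N f k.
Proof. apply cond_pos_sum; intros; apply Cnorm2_nonneg. Qed.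

Lemma shell_nonneg N f m : 0 <= shell N f m.
Proof. destruct m; unfold shell; [apply cc_nonneg|]. pose proof (cc_nonneg N f (- Z.of_nat (S m))%Z). pose proof (cc_nonneg N f (Z.of_nat (S m))). lra. Qed.

Lemma EE_nonneg N f M : 0 <= EE N f M.
Proof. apply cond_pos_sum; intros; apply shell_nonneg. Qed.

Definition W (c : Z -> R) (M : nat) : R :=
  sum_f_R0 (fun i => c (Z.of_nat i - Z.of_nat M)%Z) (2 * M).

Lemma W_S c M : W c (S M) = W c M + c (- Z.of_nat (S M))%Z + c (Z.of_nat (S M)).
Proof.
  unfold W.
  replace (2 * S M)%nat with (S (S (2 * M))) by lia.
  rewrite tech5.
  rewrite decomp_sum by lia. simpl Init.Nat.pred.
  replace (c (Z.of_nat (S (S (2 * M))) - Z.of_nat (S M))%Z) with (c (Z.of_nat (S M))) by (f_equal; lia).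
  replace (c (Z.of_nat 0 - Z.of_nat (S M))%Z) with (c (- Z.of_nat (S M))%Z) by (f_equal; lia).
  rewrite (sum_eq _ (fun i => c (Z.of_nat i - Z.of_nat M)%Z)).
  - replace (M + (M + 0))%nat with (2 * M)%nat by lia. lra.
  - intros i _. f_equal. lia.
Qed.

Lemma energy_EE N f M : energy N f M = EE N f M.
Proof.
  transitivity (W (cc N f) M); [reflexivity|].
  induction M.
  - unfold W, EE. simpl. reflexivity.
  - rewrite W_S, IHM. unfold EE. rewrite tech5. unfold shell at 3. lra.
Qed.

Lemma cc_le_gen N f g h a b k :
  (forall j, (j <= N)%nat -> Cnorm2 (f k j) <= a * Cnorm2 (g k j) + b * Cnorm2 (h k j)) ->
  cc N f k <= a * cc N g k + b * cc N h k.
Proof.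
  intros H. unfold cc. rewrite !scal_sum, <- plus_sum.
  apply sum_Rle. intros j Hj. specialize (H j Hj). lra.
Qed.

Lemma EE_le_gen N f g h a b M :
  (forall k, cc N f k <= a * cc N g k + b * cc N h k) ->
  EE N f M <= a * EE N g M + b * EE N h M.
Proof.
  intros H. unfold EE. rewrite !scal_sum, <- plus_sum.
  apply sum_Rle. intros m _. destruct m; simpl.
  - specialize (H 0%Z). lra.
  - pose proof (H (- Z.of_nat (S m))%Z). pose proof (H (Z.of_nat (S m))). simpl in *. lra.
Qed.

Lemma bnd_pt N f g h a b B1 B2 :
  (forall k j, (j <= N)%nat -> Cnorm2 (f k j) <= a * Cnorm2 (g k j) + b * Cnorm2 (h k j)) ->
  0 <= a -> 0 <= b -> bnd N g B1 -> bnd N h B2 -> bnd N f (a * B1 + b * B2).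
Proof.
  intros H Ha Hb H1 H2 M. rewrite energy_EE.
  eapply Rle_trans. apply (EE_le_gen N f g h a b M). intro k. apply cc_le_gen. apply H.
  specialize (H1 M). specialize (H2 M). rewrite energy_EE in H1, H2. nra.
Qed.

Lemma bnd_pt1 N f g a B :
  (forall k j, (j <= N)%nat -> Cnorm2 (f k j) <= a * Cnorm2 (g k j)) ->
  0 <= a -> bnd N g B -> bnd N f (a * B).
Proof.
  intros H Ha H1. replace (a * B) with (a * B + 0 * B) by ring.
  apply bnd_pt with g g; try lra; auto. intros k j Hj. specialize (H k j Hj). lra.
Qed.

Lemma bnd_mono N f B B' : bnd N f B -> B <= B' -> bnd N f B'.
Proof. intros H H' M. specialize (H M). lra. Qed.

Lemma bnd_zero N B : 0 <= B -> bnd N vzero B.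
Proof.
  intros HB M. rewrite energy_EE. unfold EE.
  replace (sum_f_R0 (shell N vzero) M) with (sum_f_R0 (fun _ => 0) M).
  - rewrite sum_cte. lra.
  - apply sum_eq. intros i _. unfold shell, cc, vzero, Cnorm2, C0; simpl.
    rewrite (sum_eq _ (fun _ => 0)) by (intros; simpl; ring). rewrite sum_cte.
    destruct i; ring.
Qed.

Ltac cnorm := unfold Cnorm2, Cadd, Copp, Cmul, C0, sub, vadd, vscal, vzero, zpow_mul in *; simpl in *.

Lemma sum_prefix An n d : (forall i, 0 <= An i) -> sum_f_R0 An n <= sum_f_R0 An (n + d).
Proof.
  intros H. induction d. rewrite Nat.add_0_r; lra.
  replace (n + S d)%nat with (S (n + d)) by lia. rewrite tech5. specialize (H (S (n+d))). lra.
Qed.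

Lemma sum_ge_term An n i : (forall i, 0 <= An i) -> (i <= n)%nat -> An i <= sum_f_R0 An n.
Proof.
  intros H Hi. induction n.
  - replace i with 0%nat by lia. simpl; lra.
  - rewrite tech5. destruct (Nat.eq_dec i (S n)).
    + subst. pose proof (cond_pos_sum An n H). lra.
    + assert (i <= n)%nat by lia. specialize (IHn H0). specialize (H (S n)). lra.
Qed.

Lemma Cn_arg (f : seqC) a b j : a = b -> Cnorm2 (f a j) = Cnorm2 (f b j).
Proof. intros ->; reflexivity. Qed.

Lemma energy_W N f M : energy N f M = W (cc N f) M.
Proof. reflexivity. Qed.

Lemma energy_shift1 N f M : energy N (zpow_mul 1 f) M <= energy N f (S M).
Proof.
  rewrite !energy_W. unfold W.
  replace (2 * S M)%nat with (2 * M + 2)%nat by lia.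
  eapply Rle_trans; [|apply sum_prefix; intros; apply cc_nonneg].
  right. apply sum_eq. intros i _. unfold cc, zpow_mul. apply sum_eq. intros j _.
  apply Cn_arg; lia.
Qed.

Lemma energy_shiftm1 N f M : energy N (zpow_mul (-1) f) M <= energy N f (S M).
Proof.
  rewrite !energy_W. unfold W.
  replace (2 * S M)%nat with (S (S (2 * M))) by lia.
  rewrite (decomp_sum _ (S (S (2 * M)))) by lia. simpl Init.Nat.pred.
  rewrite (decomp_sum _ (S (2 * M))) by lia. simpl Init.Nat.pred.
  pose proof (cc_nonneg N f (Z.of_nat 0 - Z.of_nat (S M))).
  pose proof (cc_nonneg N f (Z.of_nat 1 - Z.of_nat (S M))).
  match goal with |- ?a <= _ + (_ + ?b) => assert (a = b) end.
  { apply sum_eq. intros i _. unfold cc, zpow_mul. apply sum_eq. intros j _. apply Cn_arg; lia. }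
  lra.
Qed.

Lemma bnd_shift1 N f B : bnd N f B -> bnd N (zpow_mul 1 f) B.
Proof. intros H M. eapply Rle_trans. apply energy_shift1. apply H. Qed.
Lemma bnd_shiftm1 N f B : bnd N f B -> bnd N (zpow_mul (-1) f) B.
Proof. intros H M. eapply Rle_trans. apply energy_shiftm1. apply H. Qed.

Lemma zpow_comp a b f : zpow_mul a (zpow_mul b f) = zpow_mul (a + b) f.
Proof. unfold zpow_mul. apply functional_extensionality; intro k. apply functional_extensionality; intro j. f_equal. lia. Qed.
Lemma zpow_0 f : zpow_mul 0 f = f.
Proof. unfold zpow_mul. apply functional_extensionality; intro k. apply functional_extensionality; intro j. f_equal. lia. Qed.

Lemma bnd_shift N f B z : bnd N f B -> bnd N (zpow_mul z f) B.
Proof.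
  intros H.
  assert (Hp : forall n : nat, bnd N (zpow_mul (Z.of_nat n) f) B /\ bnd N (zpow_mul (- Z.of_nat n) f) B).
  { induction n. simpl. rewrite zpow_0. auto.
    destruct IHn as [H1 H2]. split.
    - replace (Z.of_nat (S n)) with (1 + Z.of_nat n)%Z by lia. rewrite <- zpow_comp. apply bnd_shift1; auto.
    - replace (- Z.of_nat (S n))%Z with (-1 + - Z.of_nat n)%Z by lia. rewrite <- zpow_comp. apply bnd_shiftm1; auto. }
  destruct (Z_le_gt_dec 0 z).
  - replace z with (Z.of_nat (Z.to_nat z)) by lia. apply Hp.
  - replace z with (- Z.of_nat (Z.to_nat (- z)))%Z by lia. apply Hp.
Qed.

Lemma Cnorm2_le_energy N f k j : (j <= N)%nat -> Cnorm2 (f k j) <= energy N f (Z.abs_nat k).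
Proof.
  intros Hj. rewrite energy_EE. unfold EE.
  eapply Rle_trans; [|apply sum_ge_term with (i := Z.abs_nat k); [intros; apply shell_nonneg| lia]].
  assert (Hc : Cnorm2 (f k j) <= cc N f k).
  { unfold cc. apply (sum_ge_term (fun j => Cnorm2 (f k j))); auto. intros; apply Cnorm2_nonneg. }
  destruct (Z.abs_nat k) eqn:Hk.
  - assert (k = 0%Z) by lia. subst. simpl. apply Hc.
  - unfold shell. pose proof (cc_nonneg N f (- Z.of_nat (S n))). pose proof (cc_nonneg N f (Z.of_nat (S n))).
    destruct (Z_le_gt_dec 0 k).
    + assert (k = Z.of_nat (S n)) by lia; subst k; lra.
    + assert (k = (- Z.of_nat (S n))%Z) by lia; subst k; lra.
Qed.

Definition tl (L : nat) (f : seqC) : seqC := fun k j => if (Z.abs k <=? Z.of_nat L)%Z then C0 else f k j.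
Definition hd (L : nat) (f : seqC) : seqC := fun k j => if (Z.abs k <=? Z.of_nat L)%Z then f k j else C0.

Lemma shell_tl N L f m : shell N (tl L f) m = if (m <=? L)%nat then 0 else shell N f m.
Proof.
  assert (Hcc : forall k, cc N (tl L f) k = if (Z.abs k <=? Z.of_nat L)%Z then 0 else cc N f k).
  { intros k. unfold cc, tl. destruct (Z.abs k <=? Z.of_nat L)%Z.
    - rewrite (sum_eq _ (fun _ => 0)) by (intros; unfold Cnorm2, C0; simpl; ring). rewrite sum_cte. ring.
    - reflexivity. }
  destruct m; unfold shell; rewrite ?Hcc.
  - simpl. destruct (0 <=? Z.of_nat L)%Z eqn:E; auto. apply Z.leb_gt in E; lia.
  - replace (Z.abs (- Z.of_nat (S m))) with (Z.of_nat (S m)) by lia.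
    replace (Z.abs (Z.of_nat (S m))) with (Z.of_nat (S m)) by lia.
    destruct (S m <=? L)%nat eqn:E1; destruct (Z.of_nat (S m) <=? Z.of_nat L)%Z eqn:E2; try lra;
    apply Nat.leb_le in E1 || apply Nat.leb_gt in E1; apply Z.leb_le in E2 || apply Z.leb_gt in E2; lia.
Qed.

Lemma EE_tl_low N L f M : (M <= L)%nat -> EE N (tl L f) M = 0.
Proof.
  induction M; intros H; unfold EE in *.
  - change (shell N (tl L f) 0%nat = 0). rewrite shell_tl. replace (0 <=? L)%nat with true by (symmetry; apply Nat.leb_le; lia). auto.
  - rewrite tech5, IHM by lia. rewrite shell_tl. replace (S M <=? L)%nat with true by (symmetry; apply Nat.leb_le; lia). ring.
Qed.

Lemma EE_tl_high N L f d : EE N (tl L f) (L + d) = EE N f (L + d) - EE N f L.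
Proof.
  induction d.
  - rewrite Nat.add_0_r, EE_tl_low by lia. ring.
  - replace (L + S d)%nat with (S (L + d)) by lia. unfold EE in *. rewrite !tech5, IHd, shell_tl.
    replace (S (L + d) <=? L)%nat with false by (symmetry; apply Nat.leb_gt; lia). ring.
Qed.

Lemma tail_small N f B : bnd N f B -> forall d, 0 < d -> exists L, bnd N (tl L f) d.
Proof.
  intros HB d Hd.
  destruct (completeness (fun x => exists M, x = EE N f M)) as [s [Hs1 Hs2]].
  { exists B. intros x [M ->]. rewrite <- energy_EE. apply HB. }
  { exists (EE N f 0). eauto. }
  assert (exists L, s - d < EE N f L) as [L HL].
  { apply NNPP. intros Hn. assert (s <= s - d); [|lra]. apply Hs2. intros x [M ->].
    apply Rnot_lt_le. intros Hc. apply Hn. eauto. }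
  exists L. intros M. rewrite energy_EE.
  destruct (le_lt_dec M L).
  - rewrite EE_tl_low by auto. lra.
  - replace M with (L + (M - L))%nat by lia. rewrite EE_tl_high.
    assert (EE N f (L + (M - L)) <= s) by (apply Hs1; eauto). lra.
Qed.

Lemma hd_tl f L k j : f k j = Cadd (hd L f k j) (tl L f k j).
Proof. unfold hd, tl. destruct (Z.abs k <=? Z.of_nat L)%Z; cnorm; destruct (f k j); simpl; f_equal; ring. Qed.

Lemma funext2 (f g : seqC) : (forall k j, f k j = g k j) -> f = g.
Proof. intros H. apply functional_extensionality; intro k. apply functional_extensionality; intro j. auto. Qed.

Lemma Ceq (a b : Defs.C) : fst a = fst b -> snd a = snd b -> a = b.
Proof. destruct a, b; simpl; intros -> ->; reflexivity. Qed.

Ltac cdes := repeat match goal with | [ |- context [ ?f ?k ?j ] ] => (let t := type of (f k j) in constr_eq t Defs.C; destruct (f k j)) end.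

Lemma Cn_add a b : Cnorm2 (Cadd a b) <= 2 * Cnorm2 a + 2 * Cnorm2 b.
Proof.
  destruct a as [a1 a2], b as [b1 b2]. unfold Cnorm2, Cadd; simpl.
  pose proof (Rle_0_sqr (a1 - b1)). pose proof (Rle_0_sqr (a2 - b2)). unfold Rsqr in *. nra.
Qed.

Lemma Cn_sub a b : Cnorm2 (Cadd a (Copp b)) <= 2 * Cnorm2 a + 2 * Cnorm2 b.
Proof.
  destruct a as [a1 a2], b as [b1 b2]. unfold Cnorm2, Cadd, Copp; simpl.
  pose proof (Rle_0_sqr (a1 + b1)). pose proof (Rle_0_sqr (a2 + b2)). unfold Rsqr in *. nra.
Qed.

Lemma Cn_tri a m b : Cnorm2 (Cadd a (Copp b)) <= 2 * Cnorm2 (Cadd a (Copp m)) + 2 * Cnorm2 (Cadd m (Copp b)).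
Proof.
  replace (Cadd a (Copp b)) with (Cadd (Cadd a (Copp m)) (Cadd m (Copp b))). apply Cn_add.
  destruct a, m, b; unfold Cadd, Copp; simpl; apply Ceq; simpl; ring.
Qed.

Lemma bnd_sub_tri N a m b B1 B2 : bnd N (sub a m) B1 -> bnd N (sub m b) B2 -> bnd N (sub a b) (2 * B1 + 2 * B2).
Proof.
  intros H1 H2. apply bnd_pt with (sub a m) (sub m b); try lra; auto.
  intros k j _. unfold sub. apply Cn_tri.
Qed.

Lemma bnd_add N f g B1 B2 : bnd N f B1 -> bnd N g B2 -> bnd N (vadd f g) (2 * B1 + 2 * B2).
Proof.
  intros H1 H2. apply bnd_pt with f g; try lra; auto.
  intros k j _. unfold vadd. apply Cn_add.
Qed.

Lemma Cnorm2_mul c a : Cnorm2 (Cmul c a) = Cnorm2 c * Cnorm2 a.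
Proof. destruct c, a; unfold Cnorm2, Cmul; simpl; ring. Qed.

Lemma bnd_scal N f c B : bnd N f B -> bnd N (vscal c f) (Cnorm2 c * B).
Proof.
  intros H. apply bnd_pt1 with f; auto. intros k j _. unfold vscal. rewrite Cnorm2_mul. lra. apply Cnorm2_nonneg.
Qed.

Lemma bnd_ext N f g B : (forall k j, f k j = g k j) -> bnd N f B -> bnd N g B.
Proof. intros H. rewrite (funext2 f g H). auto. Qed.

Lemma bnd_nonneg N f B : bnd N f B -> 0 <= B.
Proof. intros H. specialize (H 0%nat). rewrite energy_EE in H. pose proof (EE_nonneg N f 0). lra. Qed.

Lemma bnd_sub_self N f : bnd N (sub f f) 0.
Proof. intros M. apply bnd_ext with vzero. intros; unfold sub, vzero; cnorm; destruct (f k j); simpl; apply Ceq; simpl; ring. apply bnd_zero; lra. Qed.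

Lemma inH_add N f g : in_H N f -> in_H N g -> in_H N (vadd f g).
Proof.
  intros [Hf [B1 HB1]] [Hg [B2 HB2]]. split.
  - intros k j Hj. unfold vadd. rewrite Hf, Hg by auto. cnorm. apply Ceq; simpl; ring.
  - exists (2*B1 + 2*B2). apply bnd_add; auto.
Qed.

Lemma inH_scal N c f : in_H N f -> in_H N (vscal c f).
Proof.
  intros [Hf [B1 HB1]]. split.
  - intros k j Hj. unfold vscal. rewrite Hf by auto. cnorm. apply Ceq; simpl; ring.
  - exists (Cnorm2 c * B1). apply bnd_scal; auto.
Qed.

Lemma sub_eq f g : sub f g = vadd f (vscal (-1, 0) g).
Proof. apply funext2. intros. unfold sub, vadd, vscal. cnorm. destruct (g k j). apply Ceq; simpl; ring. Qed.

Lemma inH_sub N f g : in_H N f -> in_H N g -> in_H N (sub f g).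
Proof. intros. rewrite sub_eq. apply inH_add; auto. apply inH_scal; auto. Qed.

Lemma inH_shift N z f : in_H N f -> in_H N (zpow_mul z f).
Proof.
  intros [Hf [B HB]]. split.
  - intros k j Hj. unfold zpow_mul. auto.
  - exists B. apply bnd_shift; auto.
Qed.

Lemma inH_zero N : in_H N vzero.
Proof. split. intros; reflexivity. exists 0. apply bnd_zero; lra. Qed.

Lemma bnd_hd N L f B : bnd N f B -> bnd N (hd L f) B.
Proof.
  intros H. replace B with (1 * B) by ring. apply bnd_pt1 with f; auto; try lra.
  intros k j _. unfold hd. destruct (Z.abs k <=? Z.of_nat L)%Z. lra. cnorm. pose proof (Cnorm2_nonneg (f k j)). unfold Cnorm2 in *. lra.
Qed.

Lemma inH_hd N L f : in_H N f -> in_H N (hd L f).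
Proof.
  intros [Hf [B HB]]. split.
  - intros k j Hj. unfold hd. destruct (Z.abs k <=? Z.of_nat L)%Z; auto.
  - exists B. apply bnd_hd; auto.
Qed.

Lemma P_add (N : nat) (P : seqC -> Prop) f g : is_subspace N P -> P f -> P g -> P (vadd f g).
Proof. intros [_ [_ [H _]]]. apply H. Qed.
Lemma P_scal (N : nat) (P : seqC -> Prop) c f : is_subspace N P -> P f -> P (vscal c f).
Proof. intros [_ [_ [_ H]]]. apply H. Qed.
Lemma P_zero (N : nat) (P : seqC -> Prop) : is_subspace N P -> P vzero.
Proof. intros [_ [H _]]. apply H. Qed.
Lemma P_inH N P f : is_subspace N P -> P f -> in_H N f.
Proof. intros [H _]. apply H. Qed.
Lemma P_sub (N : nat) (P : seqC -> Prop) f g : is_subspace N P -> P f -> P g -> P (sub f g).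
Proof. intros. rewrite sub_eq. apply P_add with N; auto. apply P_scal with N; auto. Qed.

Lemma P_shiftm (N : nat) (P : seqC -> Prop) f n : (forall f, P f -> P (zpow_mul (-1) f)) -> P f -> P (zpow_mul (- Z.of_nat n) f).
Proof.
  intros Hz Hf. induction n. simpl. rewrite zpow_0. auto.
  replace (- Z.of_nat (S n))%Z with (-1 + - Z.of_nat n)%Z by lia. rewrite <- zpow_comp. auto.
Qed.

Lemma Hplus_sub N f g : Hplus N f -> Hplus N g -> Hplus N (sub f g).
Proof.
  intros [Hf1 Hf2] [Hg1 Hg2]. split. apply inH_sub; auto.
  intros k j Hk. unfold sub. rewrite Hf2, Hg2 by auto. cnorm. apply Ceq; simpl; ring.
Qed.

Definition DEC N P (pp hh : seqC -> seqC) := forall f, in_H N f ->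
  P (pp f) /\ Hplus N (hh f) /\ forall k j, f k j = Cadd (pp f k j) (hh f k j).

Lemma dec_unique N P pp hh f p h : is_subspace N P ->
  (forall f, P f -> Hplus N f -> forall k j, f k j = C0) -> DEC N P pp hh ->
  in_H N f -> P p -> Hplus N h -> (forall k j, f k j = Cadd (p k j) (h k j)) -> hh f = h.
Proof.
  intros HS HU HD Hf Hp Hh Heq. destruct (HD f Hf) as [H1 [H2 H3]].
  assert (E : sub (hh f) h = sub p (pp f)).
  { apply funext2. intros k j. specialize (Heq k j). rewrite H3 in Heq. unfold sub. cnorm.
    destruct (pp f k j), (hh f k j), (p k j), (h k j). simpl in *. injection Heq; intros. apply Ceq; simpl; lra. }
  assert (Z0 : forall k j, sub (hh f) h k j = C0).
  { apply HU. rewrite E. apply P_sub with N; auto. apply Hplus_sub; auto. }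
  apply funext2. intros k j. specialize (Z0 k j). unfold sub in Z0. cnorm.
  destruct (hh f k j), (h k j). simpl in *. injection Z0; intros. apply Ceq; simpl; lra.
Qed.

Lemma dec_sub N P pp hh f g : is_subspace N P ->
  (forall f, P f -> Hplus N f -> forall k j, f k j = C0) -> DEC N P pp hh ->
  in_H N f -> in_H N g -> hh (sub f g) = sub (hh f) (hh g).
Proof.
  intros HS HU HD Hf Hg. destruct (HD f Hf) as [F1 [F2 F3]]. destruct (HD g Hg) as [G1 [G2 G3]].
  apply dec_unique with N P pp (sub (pp f) (pp g)); auto.
  apply inH_sub; auto. apply P_sub with N; auto. apply Hplus_sub; auto.
  intros k j. unfold sub. rewrite F3, G3. cnorm. destruct (pp f k j), (hh f k j), (pp g k j), (hh g k j). apply Ceq; simpl; ring.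
Qed.

Lemma dec_scal N P pp hh c f : is_subspace N P ->
  (forall f, P f -> Hplus N f -> forall k j, f k j = C0) -> DEC N P pp hh ->
  in_H N f -> hh (vscal c f) = vscal c (hh f).
Proof.
  intros HS HU HD Hf. destruct (HD f Hf) as [F1 [[F2a F2b] F3]].
  apply dec_unique with N P pp (vscal c (pp f)); auto.
  apply inH_scal; auto. apply P_scal with N; auto.
  split. apply inH_scal; auto. intros k j Hk. unfold vscal. rewrite F2b by auto. cnorm. apply Ceq; simpl; ring.
  intros k j. unfold vscal. rewrite F3. cnorm. destruct (pp f k j), (hh f k j), c. apply Ceq; simpl; ring.
Qed.

Lemma Cnorm2_zero a : (forall e, 0 < e -> Cnorm2 a <= e) -> a = C0.
Proof.
  intros H. destruct a as [x y]. unfold Cnorm2 in H; simpl in H.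
  assert (x * x + y * y <= 0).
  { apply Rnot_lt_le. intros Hc. specialize (H ((x*x+y*y)/2)). lra. }
  unfold C0. apply Ceq; simpl; nra.
Qed.

Lemma closed_graph N P pp hh x (s : nat -> seqC) g : is_subspace N P -> is_closed N P ->
  (forall f, P f -> Hplus N f -> forall k j, f k j = C0) -> DEC N P pp hh ->
  in_H N x -> (forall K, in_H N (s K)) -> in_H N g ->
  (forall e, 0 < e -> exists K, bnd N (sub x (s K)) e /\ bnd N (sub g (hh (s K))) e) ->
  hh x = g.
Proof.
  intros HS HC HU HD Hx Hs Hg Hconv.
  assert (Hgp : Hplus N g).
  { split; auto. intros k j Hk. destruct (le_lt_dec j N) as [Hj|Hj]; [|apply Hg; auto].
    apply Cnorm2_zero. intros e He. destruct (Hconv e He) as [K [_ HK]].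
    destruct (HD (s K) (Hs K)) as [_ [[_ Hh] _]].
    pose proof (Cnorm2_le_energy N (sub g (hh (s K))) k j Hj). specialize (HK (Z.abs_nat k)).
    change (sub g (hh (s K)) k j) with (Cadd (g k j) (Copp (hh (s K) k j))) in H.
    rewrite Hh in H by auto. replace (Cadd (g k j) (Copp C0)) with (g k j) in H. lra.
    unfold Cadd, Copp, C0. destruct (g k j); apply Ceq; simpl; ring. }
  assert (HP : P (sub x g)).
  { apply HC. apply inH_sub; auto. intros e He.
    destruct (Hconv (e * e / 4)) as [K [H1 H2]]. nra.
    destruct (HD (s K) (Hs K)) as [Hp [_ Hd]].
    exists (pp (s K)). split; auto. unfold dist_le.
    replace (e * e) with (2 * (e * e / 4) + 2 * (e * e / 4)) by field.
    apply bnd_pt with (sub x (s K)) (sub g (hh (s K))); auto; try lra.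
    intros k j _. specialize (Hd k j). unfold sub. rewrite Hd.
    replace (Cadd (Cadd (x k j) (Copp (g k j))) (Copp (pp (s K) k j))) with
      (Cadd (Cadd (x k j) (Copp (Cadd (pp (s K) k j) (hh (s K) k j)))) (Copp (Cadd (g k j) (Copp (hh (s K) k j))))).
    apply Cn_sub.
    cnorm. destruct (x k j), (g k j), (pp (s K) k j), (hh (s K) k j). apply Ceq; simpl; ring. }
  apply dec_unique with N P pp (sub x g); auto.
  intros k j. unfold sub. cnorm. destruct (x k j), (g k j). apply Ceq; simpl; ring.
Qed.

Lemma CV_const a : Un_cv (fun _ => a) a.
Proof. intros e He. exists 0%nat. intros. unfold Rdist. rewrite Rminus_diag, Rabs_R0. lra. Qed.

Lemma CV_sum (F : nat -> nat -> R) (G : nat -> R) n :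
  (forall i, Un_cv (fun m => F m i) (G i)) -> Un_cv (fun m => sum_f_R0 (F m) n) (sum_f_R0 G n).
Proof.
  intros H. induction n.
  - simpl. apply H.
  - simpl. apply CV_plus; auto.
Qed.

Lemma energy_cv N (u : nat -> seqC) v M :
  (forall k j, Un_cv (fun m => fst (u m k j)) (fst (v k j)) /\ Un_cv (fun m => snd (u m k j)) (snd (v k j))) ->
  Un_cv (fun m => energy N (u m) M) (energy N v M).
Proof.
  intros H. unfold energy. apply CV_sum. intros i. apply CV_sum. intros j.
  destruct (H (Z.of_nat i - Z.of_nat M)%Z j) as [H1 H2]. unfold Cnorm2.
  apply CV_plus; apply CV_mult; auto.
Qed.

Lemma cv_le U l n0 B : Un_cv U l -> (forall m, (n0 <= m)%nat -> U m <= B) -> l <= B.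
Proof.
  intros Hc Hb. apply Rnot_lt_le. intros Hlt.
  destruct (Hc (l - B)) as [N0 HN0]. lra.
  specialize (HN0 (max N0 n0) ltac:(lia)). specialize (Hb (max N0 n0) ltac:(lia)).
  unfold Rdist in HN0. apply Rabs_def2 in HN0. lra.
Qed.

Lemma bnd_from_sub N x y B1 B2 : bnd N (sub x y) B1 -> bnd N y B2 -> bnd N x (2 * B1 + 2 * B2).
Proof.
  intros H1 H2. apply bnd_pt with (sub x y) y; auto; try lra.
  intros k j _. unfold sub. replace (x k j) with (Cadd (Cadd (x k j) (Copp (y k j))) (y k j)) at 1.
  apply Cn_add. unfold Cadd, Copp. destruct (x k j), (y k j). apply Ceq; simpl; ring.
Qed.

Lemma bnd_sub_sym N x y B : bnd N (sub x y) B -> bnd N (sub y x) B.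
Proof.
  intros H. replace B with (1 * B) by ring. apply bnd_pt1 with (sub x y); auto; try lra.
  intros k j _. unfold sub, Cnorm2, Cadd, Copp. destruct (x k j), (y k j). simpl. lra.
Qed.

Lemma cauchy_of_sq (u : nat -> R) :
  (forall e, 0 < e -> exists n0, forall p, (p >= n0)%nat -> (u p - u n0) * (u p - u n0) < e * e / 4) ->
  Cauchy_crit u.
Proof.
  intros H e He. destruct (H e He) as [n0 Hn0]. exists n0. intros n m Hn Hm.
  specialize (Hn0 n Hn) as H1. specialize (Hn0 m Hm) as H2.
  assert (A1 : Rabs (u n - u n0) < e / 2).
  { apply Rabs_def1; apply Rnot_le_lt; intro; nra. }
  assert (A2 : Rabs (u m - u n0) < e / 2).
  { apply Rabs_def1; apply Rnot_le_lt; intro; nra. }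
  unfold Rdist. apply Rabs_def2 in A1. apply Rabs_def2 in A2. apply Rabs_def1; lra.
Qed.

Lemma geom N (c : nat -> seqC) (r : nat -> R) :
  (forall n, in_H N (c n)) -> (forall n, 0 < r n) -> (forall n, r (S n) <= r n / 4) ->
  (forall n, bnd N (sub (c (S n)) (c n)) (r n)) ->
  exists x, in_H N x /\ forall n, bnd N (sub x (c n)) (4 * r n).
Proof.
  intros Hc Hr Hr4 Hstep.
  assert (Hd : forall d n, bnd N (sub (c (n + d)%nat) (c n)) (4 * r n)).
  { induction d; intros n.
    - rewrite Nat.add_0_r. apply bnd_mono with 0. apply bnd_sub_self. specialize (Hr n); lra.
    - replace (n + S d)%nat with (S n + d)%nat by lia.
      eapply bnd_mono. apply bnd_sub_tri with (c (S n)). apply IHd. apply Hstep.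
      specialize (Hr4 n). lra. }
  assert (Hr0 : forall n, r n <= r 0%nat * (/2) ^ n).
  { induction n. simpl; lra. simpl. specialize (Hr4 n). specialize (Hr n). nra. }
  assert (Hsmall : forall e, 0 < e -> exists n0, 4 * r n0 < e).
  { intros e He. pose proof (Hr 0%nat) as R0.
    destruct (pow_lt_1_zero (/2) ltac:(rewrite Rabs_pos_eq; lra) (e / (4 * r 0%nat))) as [n0 Hn0].
    apply Rdiv_lt_0_compat; lra.
    exists n0. specialize (Hn0 n0 (le_n _)). rewrite Rabs_pos_eq in Hn0 by (apply pow_le; lra).
    specialize (Hr0 n0).
    assert (4 * r 0%nat * (/ 2) ^ n0 < 4 * r 0%nat * (e / (4 * r 0%nat))) by (apply Rmult_lt_compat_l; lra).
    replace (4 * r 0%nat * (e / (4 * r 0%nat))) with e in H by (field; lra). lra. }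
  assert (Hcoord : forall k j, Cauchy_crit (fun n => fst (c n k j)) /\ Cauchy_crit (fun n => snd (c n k j))).
  { intros k j. destruct (le_lt_dec j N) as [Hj|Hj].
    - split; apply cauchy_of_sq; intros e He; destruct (Hsmall (e * e / 4)) as [n0 Hn0]; try nra;
      exists n0; intros p Hp; specialize (Hd (p - n0)%nat n0 (Z.abs_nat k));
      replace (n0 + (p - n0))%nat with p in Hd by lia;
      pose proof (Cnorm2_le_energy N (sub (c p) (c n0)) k j Hj);
      change (sub (c p) (c n0) k j) with (Cadd (c p k j) (Copp (c n0 k j))) in H; unfold Cnorm2, Cadd, Copp in H; simpl in H;
      pose proof (Rle_0_sqr (fst (c p k j) + - fst (c n0 k j)));
      pose proof (Rle_0_sqr (snd (c p k j) + - snd (c n0 k j))); unfold Rsqr in *; nra.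
    - split; intros e He; exists 0%nat; intros n m _ _; destruct (Hc n) as [Hn _]; destruct (Hc m) as [Hm _];
      rewrite Hn, Hm by auto; unfold Rdist; rewrite Rminus_diag, Rabs_R0; lra. }
  set (x := fun k j => (proj1_sig (R_complete _ (proj1 (Hcoord k j))), proj1_sig (R_complete _ (proj2 (Hcoord k j))))).
  assert (Hx : forall k j, Un_cv (fun n => fst (c n k j)) (fst (x k j)) /\ Un_cv (fun n => snd (c n k j)) (snd (x k j))).
  { intros k j. unfold x; simpl. split; apply proj2_sig. }
  assert (Hxb : forall n, bnd N (sub x (c n)) (4 * r n)).
  { intros n M. apply cv_le with (fun m => energy N (sub (c m) (c n)) M) n.
    - apply energy_cv. intros k j. destruct (Hx k j) as [H1 H2]. unfold sub, Cadd, Copp; simpl.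
      split; apply CV_plus; auto; apply CV_const.
    - intros m Hm. replace m with (n + (m - n))%nat by lia. apply Hd. }
  exists x. split; auto. split.
  - intros k j Hj. destruct (Hx k j) as [H1 H2].
    assert (E : forall n, c n k j = C0) by (intros n; apply (proj1 (Hc n)); auto).
    assert (fst (x k j) = 0). { apply UL_sequence with (fun n => fst (c n k j)); auto.
      intros e He; exists 0%nat; intros; rewrite E; unfold Rdist, C0; simpl; rewrite Rminus_0_r, Rabs_R0; lra. }
    assert (snd (x k j) = 0). { apply UL_sequence with (fun n => snd (c n k j)); auto.
      intros e He; exists 0%nat; intros; rewrite E; unfold Rdist, C0; simpl; rewrite Rminus_0_r, Rabs_R0; lra. }
    unfold C0; apply Ceq; simpl; auto.
  - destruct (Hc 0%nat) as [_ [B HB]]. exists (2 * (4 * r 0%nat) + 2 * B). apply bnd_from_sub with (c 0%nat); auto.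
Qed.

Fixpoint bseq (st : nat -> seqC -> R -> seqC * R) (n : nat) : seqC * R :=
  match n with
  | O => (vzero, 1)
  | S m => let p := bseq st m in let q := st m (fst p) (snd p) in (fst q, Rmin (snd p) (snd q) / 4)
  end.

Lemma baire N (F : nat -> seqC -> Prop) :
  (forall x, in_H N x -> exists n, F n x) ->
  exists n c r, 0 < r /\ in_H N c /\ forall x, in_H N x -> bnd N (sub x c) r ->
    forall d, 0 < d -> exists y, F n y /\ bnd N (sub x y) d.
Proof.
  intros Hcov. apply NNPP. intros Hno.
  assert (Hneg : forall n c r, 0 < r -> in_H N c -> exists x, in_H N x /\ bnd N (sub x c) r /\
     exists d, 0 < d /\ forall y, F n y -> ~ bnd N (sub x y) d).
  { intros n c r Hr Hc. apply NNPP. intros H1. apply Hno. exists n, c, r. split; auto. split; auto.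
    intros x Hx Hb d Hd. apply NNPP. intros H2. apply H1. exists x. split; auto. split; auto.
    exists d. split; auto. intros y Fy Hy. apply H2. exists y. auto. }
  assert (Hex : forall t : nat * seqC * R, exists q : seqC * R,
     let '(n, c, r) := t in 0 < r -> in_H N c ->
       in_H N (fst q) /\ bnd N (sub (fst q) c) r /\ 0 < snd q /\ forall y, F n y -> ~ bnd N (sub (fst q) y) (snd q)).
  { intros [[n c] r]. destruct (classic (0 < r /\ in_H N c)) as [[Hr Hc]|Hn].
    - destruct (Hneg n c r Hr Hc) as [x [Hx [Hb [d [Hd Hf]]]]]. exists (x, d). simpl. auto.
    - exists (vzero, 1). intros Hr Hc. exfalso; auto. }
  pose (st := fun n c r => proj1_sig (constructive_indefinite_description _ (Hex (n, c, r)))).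
  assert (Hst : forall n c r, 0 < r -> in_H N c ->
       in_H N (fst (st n c r)) /\ bnd N (sub (fst (st n c r)) c) r /\ 0 < snd (st n c r) /\
       forall y, F n y -> ~ bnd N (sub (fst (st n c r)) y) (snd (st n c r))).
  { intros n c r. unfold st. destruct (constructive_indefinite_description _ (Hex (n, c, r))) as [q Hq]. simpl. exact Hq. }
  assert (Hinv : forall n, 0 < snd (bseq st n) /\ in_H N (fst (bseq st n))).
  { induction n; simpl. split; [lra|apply inH_zero].
    destruct IHn as [H1 H2]. destruct (Hst n _ _ H1 H2) as [A1 [A2 [A3 A4]]]. split; auto.
    unfold Rmin; destruct (Rle_dec _ _); lra. }
  destruct (geom N (fun n => fst (bseq st n)) (fun n => snd (bseq st n))) as [x [Hx Hxb]].
  - intros n; apply Hinv.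
  - intros n; apply Hinv.
  - intros n. simpl. pose proof (Rmin_l (snd (bseq st n)) (snd (st n (fst (bseq st n)) (snd (bseq st n))))). lra.
  - intros n. simpl. destruct (Hinv n) as [H1 H2]. apply Hst; auto.
  - destruct (Hcov x Hx) as [n Fn]. destruct (Hinv n) as [H1 H2].
    destruct (Hst n _ _ H1 H2) as [A1 [A2 [A3 A4]]]. apply (A4 x Fn).
    apply bnd_sub_sym. eapply bnd_mono. apply (Hxb (S n)). simpl.
    pose proof (Rmin_r (snd (bseq st n)) (snd (st n (fst (bseq st n)) (snd (bseq st n))))). lra.
Qed.

Lemma exists_nat_ge B : exists n, B <= INR n.
Proof.
  destruct (archimed B) as [H1 _]. destruct (Z_le_gt_dec 0 (up B)).
  - exists (Z.to_nat (up B)). rewrite INR_IZR_INZ, Z2Nat.id by auto. lra.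
  - exists 0%nat. simpl. apply Rlt_le. apply Rlt_trans with (IZR (up B)). lra. apply IZR_lt. lia.
Qed.

Fixpoint xseq (st : nat -> seqC -> seqC) (x : seqC) (i : nat) : seqC :=
  match i with O => x | S i => sub (xseq st x i) (st i (xseq st x i)) end.

Lemma hh_zero N P pp hh : is_subspace N P ->
  (forall f, P f -> Hplus N f -> forall k j, f k j = C0) -> DEC N P pp hh -> hh vzero = vzero.
Proof.
  intros HS HU HD. apply dec_unique with N P pp vzero; auto. apply inH_zero. apply P_zero with N; auto.
  split. apply inH_zero. intros; reflexivity. intros; unfold vzero, Cadd, C0; apply Ceq; simpl; ring.
Qed.

Lemma hh_bounded N P pp hh : is_subspace N P -> is_closed N P ->
  (forall f, P f -> Hplus N f -> forall k j, f k j = C0) -> DEC N P pp hh ->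
  exists a K0, 0 < a /\ forall x, in_H N x -> bnd N x a -> bnd N (hh x) K0.
Proof.
  intros HS HC HU HD.
  destruct (baire N (fun n x => in_H N x /\ bnd N (hh x) (INR n))) as [n [c [r [Hr [Hc Hb]]]]].
  { intros x Hx. destruct (HD x Hx) as [_ [[[_ [B HB]] _] _]]. destruct (exists_nat_ge B) as [n Hn].
    exists n. split; auto. eapply bnd_mono; eauto. }
  set (B := 4 * INR n + 1).
  assert (HB0 : 0 < B) by (unfold B; pose proof (pos_INR n); lra).
  assert (AP : forall x, in_H N x -> bnd N x r -> forall d, 0 < d -> exists y, in_H N y /\ bnd N (hh y) B /\ bnd N (sub x y) d).
  { intros x Hx Hxr d Hd.
    destruct (Hb (vadd x c) (inH_add N x c Hx Hc)) with (d / 4) as [y1 [[Hy1 Fy1] Hy1b]]; try lra.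
    { apply bnd_ext with x; auto. intros k j. unfold sub, vadd, Cadd, Copp. destruct (x k j), (c k j). apply Ceq; simpl; ring. }
    destruct (Hb c Hc) with (d / 4) as [y2 [[Hy2 Fy2] Hy2b]]; try lra.
    { eapply bnd_mono. apply bnd_sub_self. lra. }
    exists (sub y1 y2). split. apply inH_sub; auto. split.
    - rewrite (dec_sub N P pp hh y1 y2) by auto. eapply bnd_mono.
      apply (bnd_pt N _ (hh y1) (hh y2) 2 2); [|lra|lra|exact Fy1|exact Fy2].
      intros k j _. unfold sub. apply Cn_sub. unfold B. lra.
    - replace d with (2 * (d/4) + 2 * (d/4)) by field.
      apply bnd_pt with (sub (vadd x c) y1) (sub c y2); auto; try lra.
      intros k j _. unfold sub, vadd.
      replace (Cadd (x k j) (Copp (Cadd (y1 k j) (Copp (y2 k j))))) with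
        (Cadd (Cadd (Cadd (x k j) (c k j)) (Copp (y1 k j))) (Copp (Cadd (c k j) (Copp (y2 k j))))).
      apply Cn_sub. unfold Cadd, Copp. destruct (x k j), (c k j), (y1 k j), (y2 k j). apply Ceq; simpl; ring. }
  assert (APs : forall s, 0 < s -> forall x, in_H N x -> bnd N x (s * s * r) -> forall d, 0 < d ->
      exists y, in_H N y /\ bnd N (hh y) (s * s * B) /\ bnd N (sub x y) d).
  { intros s Hs x Hx Hxb d Hd.
    destruct (AP (vscal (/ s, 0) x)) with (d / (s * s)) as [y' [Hy' [Hy'b Hy'd]]].
    apply inH_scal; auto.
    { replace r with (Cnorm2 (/ s, 0) * (s * s * r)). apply bnd_scal; auto. unfold Cnorm2; simpl. field; lra. }
    apply Rdiv_lt_0_compat; nra.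
    exists (vscal (s, 0) y'). split. apply inH_scal; auto. split.
    - rewrite (dec_scal N P pp hh) by auto. replace (s * s * B) with (Cnorm2 (s, 0) * B).
      apply bnd_scal; auto. unfold Cnorm2; simpl; ring.
    - replace d with (Cnorm2 (s, 0) * (d / (s * s))) by (unfold Cnorm2; simpl; field; lra).
      apply bnd_ext with (vscal (s, 0) (sub (vscal (/ s, 0) x) y')). 2: apply bnd_scal; auto.
      intros k j. unfold vscal, sub, Cmul, Cadd, Copp. destruct (x k j), (y' k j). apply Ceq; simpl; field; lra. }
  set (q := fun i : nat => (/2) ^ i * (/2) ^ i).
  assert (Hq : forall i, 0 < q i) by (intros i; unfold q; pose proof (pow_lt (/2) i ltac:(lra)); nra).
  assert (HqS : forall i, q (S i) = q i / 4) by (intros i; unfold q; simpl; field).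
  exists r, (2 * (4 * B) + 2 * 0). split; auto.
  intros x Hx Hxr.
  assert (Hex : forall t : nat * seqC, exists y, in_H N (snd t) -> bnd N (snd t) (q (fst t) * r) ->
      in_H N y /\ bnd N (hh y) (q (fst t) * B) /\ bnd N (sub (snd t) y) (q (S (fst t)) * r)).
  { intros [i z]. simpl. destruct (classic (in_H N z /\ bnd N z (q i * r))) as [[H1 H2]|Hn].
    - destruct (APs ((/2) ^ i) (pow_lt (/2) i ltac:(lra)) z H1 H2 (q (S i) * r)) as [y Hy].
      specialize (Hq (S i)); nra. exists y. intros _ _. exact Hy.
    - exists vzero. intros H1 H2; exfalso; auto. }
  pose (st := fun i z => proj1_sig (constructive_indefinite_description _ (Hex (i, z)))).
  assert (Hst : forall i z, in_H N z -> bnd N z (q i * r) ->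
      in_H N (st i z) /\ bnd N (hh (st i z)) (q i * B) /\ bnd N (sub z (st i z)) (q (S i) * r)).
  { intros i z. unfold st. destruct (constructive_indefinite_description _ (Hex (i, z))) as [y Hy]. exact Hy. }
  set (xs := xseq st x).
  assert (Hxs : forall i, in_H N (xs i) /\ bnd N (xs i) (q i * r)).
  { induction i; simpl.
    - split; auto. unfold q; simpl. replace (1 * 1 * r) with r by ring. auto.
    - destruct IHi as [H1 H2]. destruct (Hst i (xs i) H1 H2) as [A1 [A2 A3]]. split.
      apply inH_sub; auto. exact A3. }
  set (t := fun K => hh (sub x (xs K))).
  assert (Hsx : forall K, in_H N (sub x (xs K))) by (intros; apply inH_sub; auto; apply Hxs).
  destruct (geom N t (fun K => q K * B)) as [g [Hg Hgb]].
  - intros K. destruct (HD _ (Hsx K)) as [_ [[H _] _]]. exact H.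
  - intros K. specialize (Hq K). nra.
  - intros K. rewrite HqS. lra.
  - intros K. unfold t. rewrite <- (dec_sub N P pp hh) by auto.
    replace (sub (sub x (xs (S K))) (sub x (xs K))) with (st K (xs K)).
    apply (Hst K (xs K)); apply Hxs.
    apply funext2. intros k j. change (xs (S K)) with (sub (xs K) (st K (xs K))). unfold sub, Cadd, Copp. destruct (x k j), (xs K k j), (st K (xs K) k j).
    apply Ceq; simpl; ring.
  - assert (Hg' : hh x = g).
    { apply closed_graph with N P pp (fun K => sub x (xs K)); auto.
      intros e He.
      destruct (pow_lt_1_zero (/2) ltac:(rewrite Rabs_pos_eq; lra) (e / (4 * B + r))) as [K HK].
      apply Rdiv_lt_0_compat; lra.
      specialize (HK K (le_n _)). rewrite Rabs_pos_eq in HK by (apply pow_le; lra).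
      assert (Hqk : q K <= (/2) ^ K).
      { unfold q. pose proof (pow_le (/2) K ltac:(lra)). assert ((/2)^K <= 1) by (clear; induction K; simpl; [lra|]; pose proof (pow_le (/2) K ltac:(lra)); nra). nra. }
      assert (Hsm : (4 * B + r) * q K < e).
      { assert ((4 * B + r) * (/2) ^ K < (4 * B + r) * (e / (4 * B + r))) by (apply Rmult_lt_compat_l; lra).
        replace ((4 * B + r) * (e / (4 * B + r))) with e in H by (field; lra). pose proof (Hq K). nra. }
      exists K. split.
      - apply bnd_ext with (xs K). intros k j. unfold sub, Cadd, Copp. destruct (x k j), (xs K k j). apply Ceq; simpl; ring.
        eapply bnd_mono. apply Hxs. pose proof (Hq K). nra.
      - eapply bnd_mono. apply Hgb. pose proof (Hq K). nra. }
    rewrite Hg'. apply bnd_from_sub with (t 0%nat). replace (4 * B) with (4 * (q 0%nat * B)) by (unfold q; simpl; ring). apply Hgb.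
    unfold t. change (xs 0%nat) with x. replace (sub x x) with vzero. rewrite (hh_zero N P pp hh) by auto. apply bnd_zero; lra.
    apply funext2. intros k j. unfold sub, vzero, Cadd, Copp, C0. destruct (x k j). apply Ceq; simpl; ring.
Qed.

Definition Dset N (P : seqC -> Prop) (g : seqC) : Prop :=
  forall eps, 0 < eps -> exists (n : nat) p, P p /\ bnd N (sub g (zpow_mul (Z.of_nat n) p)) eps.

Lemma Cn_add0 a b : (a = C0 \/ b = C0) -> Cnorm2 (Cadd a b) <= 1 * Cnorm2 a + 1 * Cnorm2 b.
Proof.
  intros [->| ->]; unfold Cnorm2, Cadd, C0; destruct a || destruct b; simpl; nra.
Qed.

Lemma avg_D N P pp hh a K0 e : is_subspace N P -> (forall f, P f -> P (zpow_mul (-1) f)) ->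
  (forall f, P f -> Hplus N f -> forall k j, f k j = C0) -> DEC N P pp hh ->
  (forall x, in_H N x -> bnd N x a -> bnd N (hh x) K0) ->
  in_H N e -> bnd N e a -> Dset N P e.
Proof.
  intros HS HZ HU HD Hbd He Hea.
  set (y := fun m : nat => zpow_mul (- Z.of_nat m) e).
  assert (Hy : forall m, in_H N (y m)) by (intros; apply inH_shift; auto).
  set (b := fun m : nat => zpow_mul (Z.of_nat m) (hh (y m))).
  assert (Hbb : forall m, bnd N (b m) K0).
  { intros m. apply bnd_shift. apply Hbd; auto. apply bnd_shift; auto. }
  assert (Hb0 : forall m k j, (k < Z.of_nat m)%Z -> b m k j = C0).
  { intros m k j Hk. destruct (HD (y m) (Hy m)) as [_ [[_ H] _]]. unfold b, zpow_mul. apply H. lia. }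
  assert (Heb : forall m k j, e k j = Cadd (zpow_mul (Z.of_nat m) (pp (y m)) k j) (b m k j)).
  { intros m k j. destruct (HD (y m) (Hy m)) as [_ [_ H]]. unfold b. unfold zpow_mul at 1 2.
    rewrite <- H. unfold y, zpow_mul. f_equal. lia. }
  assert (HK0 : 0 <= K0) by (apply bnd_nonneg with N (b 0%nat); auto).
  assert (Inv : forall K tau, 0 < tau -> exists A T (L n : nat) p, P p /\ bnd N A (INR K * K0) /\ bnd N T tau /\
     (forall k j, (Z.of_nat L < Z.abs k)%Z -> A k j = C0) /\
     forall k j, Cadd (Cadd (A k j) (T k j)) (zpow_mul (Z.of_nat n) p k j) = Cmul (INR K, 0) (e k j)).
  { induction K; intros tau Htau.
    - exists vzero, vzero, 0%nat, 0%nat, vzero. split. apply P_zero with N; auto.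
      split. apply bnd_mono with 0. apply bnd_zero; lra. simpl; lra.
      split. apply bnd_zero; lra. split. intros; reflexivity.
      intros k j. unfold vzero, zpow_mul, Cadd, Cmul, C0. simpl INR. destruct (e k j). apply Ceq; simpl; ring.
    - destruct (IHK (tau / 4)) as [A [T [L [n [p [Hp [HA [HT [HAs HAe]]]]]]]]]. lra.
      set (m := S L).
      destruct (tail_small N (b m) K0 (Hbb m) (tau / 4)) as [L' HL']. lra.
      exists (vadd A (hd L' (b m))), (vadd T (tl L' (b m))), (max L L'), (n + m)%nat,
        (vadd (zpow_mul (- Z.of_nat m) p) (zpow_mul (- Z.of_nat n) (pp (y m)))).
      split. apply P_add with N; auto; apply (P_shiftm N); auto. destruct (HD (y m) (Hy m)) as [H _]; auto.
      split. replace (INR (S K) * K0) with (1 * (INR K * K0) + 1 * K0) by (rewrite S_INR; ring).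
      { apply bnd_pt with A (hd L' (b m)); try lra; auto. 2: apply bnd_hd; auto.
        intros k j _. unfold vadd. apply Cn_add0.
        destruct (Z_lt_le_dec (Z.of_nat L) (Z.abs k)). left; auto.
        right. unfold hd. destruct (Z.abs k <=? Z.of_nat L')%Z; auto. apply Hb0. unfold m. lia. }
      split. replace tau with (2 * (tau/4) + 2 * (tau/4)) by field. apply bnd_add; auto.
      split. intros k j Hk. unfold vadd, hd. rewrite HAs by lia.
        replace (Z.abs k <=? Z.of_nat L')%Z with false by (symmetry; apply Z.leb_gt; lia).
        unfold Cadd, C0; apply Ceq; simpl; ring.
      intros k j. specialize (HAe k j). specialize (Heb m k j). rewrite (hd_tl (b m) L' k j) in Heb.
      unfold vadd. unfold zpow_mul in *.
      replace (k - Z.of_nat (n + m) - - Z.of_nat m)%Z with (k - Z.of_nat n)%Z by lia.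
      replace (k - Z.of_nat (n + m) - - Z.of_nat n)%Z with (k - Z.of_nat m)%Z by lia.
      rewrite S_INR. rewrite Heb. rewrite Heb in HAe. revert HAe.
      unfold Cadd, Cmul. destruct (A k j), (T k j), (p (k - Z.of_nat n)%Z j), (pp (y m) (k - Z.of_nat m)%Z j),
        (hd L' (b m) k j), (tl L' (b m) k j). simpl. intros HAe. injection HAe; intros.
      apply Ceq; simpl; lra. }
  intros eps Heps.
  destruct (exists_nat_ge (4 * K0 / eps + 1)) as [K HK].
  assert (HK1 : 1 <= INR K). { assert (0 <= 4 * K0 / eps) by (unfold Rdiv; apply Rmult_le_pos; [lra| apply Rlt_le, Rinv_0_lt_compat; lra]). lra. }
  destruct (Inv K (eps / 4)) as [A [T [L [n [p [Hp [HA [HT [_ HAe]]]]]]]]]. lra.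
  exists n, (vscal (/ INR K, 0) p). split. apply P_scal with N; auto.
  apply bnd_ext with (vscal (/ INR K, 0) (vadd A T)).
  { intros k j. specialize (HAe k j). unfold vscal, vadd, sub, zpow_mul in *. revert HAe.
    unfold Cadd, Cmul, Copp. destruct (A k j) as [a1 a2], (T k j) as [t1 t2], (p (k - Z.of_nat n)%Z j) as [p1 p2], (e k j) as [e1 e2].
    simpl. intros HAe. injection HAe; intros.
    apply Ceq; simpl.
    - replace e1 with ((a1 + t1 + p1) / INR K) by (rewrite H0; field; lra). field; lra.
    - replace e2 with ((a2 + t2 + p2) / INR K) by (rewrite H; field; lra). field; lra. }
  eapply bnd_mono. apply bnd_scal. apply bnd_add; eauto.
  unfold Cnorm2; simpl. set (X := INR K) in *.
  assert (4 * K0 <= X * eps).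
  { assert (4 * K0 / eps <= X) by lra. apply Rmult_le_compat_r with (r := eps) in H; try lra.
    replace (4 * K0 / eps * eps) with (4 * K0) in H by (field; lra). lra. }
  assert (Hinv : / X * / X * (2 * (X * K0) + 2 * (eps / 4)) = 2 * K0 / X + eps / (2 * X * X)) by (field; lra).
  rewrite Rmult_0_l, Rplus_0_r, Hinv.
  assert (2 * K0 / X <= eps / 2).
  { apply Rmult_le_reg_r with X. lra. replace (2 * K0 / X * X) with (2 * K0) by (field; lra). nra. }
  assert (eps / (2 * X * X) <= eps / 2).
  { unfold Rdiv. apply Rmult_le_compat_l. lra. apply Rinv_le_contravar. lra. nra. }
  lra.
Qed.


Lemma D_ext N P f g : (forall k j, f k j = g k j) -> Dset N P f -> Dset N P g.
Proof. intros H. rewrite (funext2 f g H). auto. Qed.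

Lemma D_zero N P : is_subspace N P -> Dset N P vzero.
Proof.
  intros HS e He. exists 0%nat, vzero. split. apply P_zero with N; auto.
  apply bnd_ext with vzero. intros; unfold sub, vzero, zpow_mul, Cadd, Copp, C0; apply Ceq; simpl; ring.
  apply bnd_zero; lra.
Qed.

Lemma D_add N P f g : is_subspace N P -> (forall f, P f -> P (zpow_mul (-1) f)) ->
  Dset N P f -> Dset N P g -> Dset N P (vadd f g).
Proof.
  intros HS HZ Hf Hg e He.
  destruct (Hf (e/4)) as [n1 [p1 [Hp1 H1]]]. lra. destruct (Hg (e/4)) as [n2 [p2 [Hp2 H2]]]. lra.
  exists (n1 + n2)%nat, (vadd (zpow_mul (- Z.of_nat n2) p1) (zpow_mul (- Z.of_nat n1) p2)).
  split. apply P_add with N; auto; apply (P_shiftm N); auto.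
  replace e with (2 * (e/4) + 2 * (e/4)) by field.
  apply bnd_pt with (sub f (zpow_mul (Z.of_nat n1) p1)) (sub g (zpow_mul (Z.of_nat n2) p2)); auto; try lra.
  intros k j _. unfold sub, vadd, zpow_mul.
  replace (k - Z.of_nat (n1 + n2) - - Z.of_nat n2)%Z with (k - Z.of_nat n1)%Z by lia.
  replace (k - Z.of_nat (n1 + n2) - - Z.of_nat n1)%Z with (k - Z.of_nat n2)%Z by lia.
  match goal with |- Cnorm2 ?x <= _ * Cnorm2 ?a + _ * Cnorm2 ?b => replace x with (Cadd a b) end.
  apply Cn_add. unfold Cadd, Copp. destruct (f k j), (g k j), (p1 (k - Z.of_nat n1)%Z j), (p2 (k - Z.of_nat n2)%Z j).
  apply Ceq; simpl; ring.
Qed.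

Lemma D_scal N P c f : is_subspace N P -> Dset N P f -> Dset N P (vscal c f).
Proof.
  intros HS Hf e He. pose proof (Cnorm2_nonneg c).
  destruct (Hf (e / (Cnorm2 c + 1))) as [n [p [Hp H1]]]. apply Rdiv_lt_0_compat; lra.
  exists n, (vscal c p). split. apply P_scal with N; auto.
  apply bnd_ext with (vscal c (sub f (zpow_mul (Z.of_nat n) p))).
  intros k j. unfold vscal, sub, zpow_mul, Cmul, Cadd, Copp. destruct c, (f k j), (p (k - Z.of_nat n)%Z j). apply Ceq; simpl; ring.
  eapply bnd_mono. apply bnd_scal; eauto.
  replace e with ((Cnorm2 c + 1) * (e / (Cnorm2 c + 1))) at 2 by (field; lra).
  apply Rmult_le_compat_r. apply Rlt_le, Rdiv_lt_0_compat; lra. lra.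
Qed.

Lemma D_shift1 N P f : Dset N P f -> Dset N P (zpow_mul 1 f).
Proof.
  intros Hf e He. destruct (Hf e He) as [n [p [Hp H1]]]. exists (S n), p. split; auto.
  apply bnd_ext with (zpow_mul 1 (sub f (zpow_mul (Z.of_nat n) p))).
  intros k j. unfold sub, zpow_mul. do 2 f_equal. f_equal. lia. apply bnd_shift; auto.
Qed.

Lemma D_shiftm1 N P f : (forall f, P f -> P (zpow_mul (-1) f)) -> Dset N P f -> Dset N P (zpow_mul (-1) f).
Proof.
  intros HZ Hf e He. destruct (Hf e He) as [n [p [Hp H1]]]. exists n, (zpow_mul (-1) p). split; auto.
  apply bnd_ext with (zpow_mul (-1) (sub f (zpow_mul (Z.of_nat n) p))).
  intros k j. unfold sub, zpow_mul. do 2 f_equal. f_equal. lia. apply bnd_shift; auto.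
Qed.

Lemma D_shift N P f z : (forall f, P f -> P (zpow_mul (-1) f)) -> Dset N P f -> Dset N P (zpow_mul z f).
Proof.
  intros HZ H.
  assert (Hp : forall n : nat, Dset N P (zpow_mul (Z.of_nat n) f) /\ Dset N P (zpow_mul (- Z.of_nat n) f)).
  { induction n. simpl. rewrite zpow_0. auto.
    destruct IHn as [H1 H2]. split.
    - replace (Z.of_nat (S n)) with (1 + Z.of_nat n)%Z by lia. rewrite <- zpow_comp. apply D_shift1; auto.
    - replace (- Z.of_nat (S n))%Z with (-1 + - Z.of_nat n)%Z by lia. rewrite <- zpow_comp. apply D_shiftm1; auto. }
  destruct (Z_le_gt_dec 0 z).
  - replace z with (Z.of_nat (Z.to_nat z)) by lia. apply Hp.
  - replace z with (- Z.of_nat (Z.to_nat (- z)))%Z by lia. apply Hp.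
Qed.

Definition ej (j0 : nat) : seqC := fun k j => if ((k =? 0)%Z && (j =? j0)%nat)%bool then (1, 0) else C0.

Lemma ej_inH N j0 : (j0 <= N)%nat -> in_H N (ej j0).
Proof.
  intros Hj. split.
  - intros k j Hj'. unfold ej. destruct (Nat.eqb_spec j j0). lia. rewrite Bool.andb_false_r. auto.
  - exists (INR (S N)). intros M. rewrite energy_EE. induction M.
    + change (cc N (ej j0) 0%Z <= INR (S N)). unfold cc.
      eapply Rle_trans. apply sum_Rle with (Bn := fun _ => 1). intros j _. unfold ej.
      destruct ((0 =? 0)%Z && (j =? j0)%nat)%bool; unfold Cnorm2, C0; simpl; lra.
      rewrite sum_cte. lra.
    + unfold EE in *. rewrite tech5.
      assert (Hz : forall k, k <> 0%Z -> cc N (ej j0) k = 0).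
      { intros k Hk. unfold cc. rewrite (sum_eq _ (fun _ => 0)). rewrite sum_cte; ring.
        intros j _. unfold ej. destruct (Z.eqb_spec k 0). exfalso; lia. simpl. unfold Cnorm2, C0; simpl; ring. }
      replace (shell N (ej j0) (S M)) with 0. lra. unfold shell. rewrite !Hz by lia. ring.
Qed.

Lemma ej_D N P pp hh a K0 j0 : is_subspace N P -> (forall f, P f -> P (zpow_mul (-1) f)) ->
  (forall f, P f -> Hplus N f -> forall k j, f k j = C0) -> DEC N P pp hh ->
  0 < a -> (forall x, in_H N x -> bnd N x a -> bnd N (hh x) K0) -> (j0 <= N)%nat -> Dset N P (ej j0).
Proof.
  intros HS HZ HU HD Ha Hb Hj.
  pose proof (ej_inH N j0 Hj) as He.
  assert (HB : bnd N (ej j0) (INR (S N))).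
  { intros M. rewrite energy_EE. clear -Hj. induction M.
    + change (cc N (ej j0) 0%Z <= INR (S N)). unfold cc.
      eapply Rle_trans. apply sum_Rle with (Bn := fun _ => 1). intros j _. unfold ej.
      destruct ((0 =? 0)%Z && (j =? j0)%nat)%bool; unfold Cnorm2, C0; simpl; lra.
      rewrite sum_cte. lra.
    + unfold EE in *. rewrite tech5.
      assert (Hz : forall k, k <> 0%Z -> cc N (ej j0) k = 0).
      { intros k Hk. unfold cc. rewrite (sum_eq _ (fun _ => 0)). rewrite sum_cte; ring.
        intros j _. unfold ej. destruct (Z.eqb_spec k 0). exfalso; lia. simpl. unfold Cnorm2, C0; simpl; ring. }
      replace (shell N (ej j0) (S M)) with 0. lra. unfold shell. rewrite !Hz by lia. ring. }
  assert (HN : 0 < INR (S N)) by (apply lt_0_INR; lia).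
  set (s := Rmin 1 (a / INR (S N))).
  assert (Hs0 : 0 < s) by (unfold s; apply Rmin_glb_lt; [lra| apply Rdiv_lt_0_compat; lra]).
  assert (Hs1 : s <= 1) by apply Rmin_l.
  assert (Hs2 : s * INR (S N) <= a).
  { assert (s <= a / INR (S N)) by apply Rmin_r. apply Rmult_le_compat_r with (r := INR (S N)) in H; try lra.
    replace (a / INR (S N) * INR (S N)) with a in H by (field; lra). lra. }
  assert (HD' : Dset N P (vscal (s, 0) (ej j0))).
  { apply avg_D with pp hh a K0; auto. apply inH_scal; auto.
    eapply bnd_mono. apply bnd_scal, HB. unfold Cnorm2; cbn [fst snd].
    assert (s * s * INR (S N) <= s * INR (S N)) by (apply Rmult_le_compat_r; nra). rewrite Rmult_0_l, Rplus_0_r; lra. }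
  apply D_ext with (vscal (/ s, 0) (vscal (s, 0) (ej j0))). 2: apply D_scal; auto.
  intros k j. unfold vscal, Cmul. destruct (ej j0 k j). apply Ceq; simpl; field; lra.
Qed.

Definition zero_at (x : Z * nat) (f : seqC) : seqC :=
  fun k j => if ((k =? fst x)%Z && (j =? snd x)%nat)%bool then C0 else f k j.
Fixpoint rl (l : list (Z * nat)) (f : seqC) : seqC :=
  match l with
  | nil => vzero
  | x :: l' => vadd (vscal (f (fst x) (snd x)) (zpow_mul (fst x) (ej (snd x)))) (rl l' (zero_at x f))
  end.
Definition memb (x : Z * nat) (l : list (Z * nat)) : bool :=
  existsb (fun y => ((fst y =? fst x)%Z && (snd y =? snd x)%nat)%bool) l.

Lemma rl_spec l : forall f k j, rl l f k j = if memb (k, j) l then f k j else C0.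
Proof.
  induction l as [|[k0 j0] l IH]; intros f k j.
  - reflexivity.
  - simpl. unfold vadd, vscal, zpow_mul, ej. rewrite IH. unfold memb; simpl.
    unfold zero_at; simpl.
    destruct (Z.eqb_spec k0 k); destruct (Nat.eqb_spec j0 j).
    + subst. replace (k - k =? 0)%Z with true by (symmetry; apply Z.eqb_eq; lia).
      rewrite Nat.eqb_refl, Z.eqb_refl. simpl.
      destruct (existsb _ l); unfold Cadd, Cmul, C0; destruct (f k j); apply Ceq; simpl; ring.
    + assert (E1 : (j =? j0)%nat = false) by (apply Nat.eqb_neq; auto).
      assert (E2 : (j0 =? j)%nat = false) by (apply Nat.eqb_neq; auto).
      rewrite ?E1, ?E2, ?Bool.andb_false_r. simpl.
      destruct (existsb _ l); unfold Cadd, Cmul, C0; destruct (f k0 j0), (f k j); apply Ceq; simpl; ring.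
    + assert (E1 : (k - k0 =? 0)%Z = false) by (apply Z.eqb_neq; lia).
      assert (E2 : (k =? k0)%Z = false) by (apply Z.eqb_neq; lia).
      assert (E3 : (k0 =? k)%Z = false) by (apply Z.eqb_neq; lia).
      rewrite ?E1, ?E2, ?E3. simpl.
      destruct (existsb _ l); unfold Cadd, Cmul, C0; destruct (f k0 j0), (f k j); apply Ceq; simpl; ring.
    + assert (E1 : (k - k0 =? 0)%Z = false) by (apply Z.eqb_neq; lia).
      assert (E2 : (k =? k0)%Z = false) by (apply Z.eqb_neq; lia).
      assert (E3 : (k0 =? k)%Z = false) by (apply Z.eqb_neq; lia).
      rewrite ?E1, ?E2, ?E3. simpl.
      destruct (existsb _ l); unfold Cadd, Cmul, C0; destruct (f k0 j0), (f k j); apply Ceq; simpl; ring.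
Qed.

Lemma D_rl N P pp hh a K0 l : is_subspace N P -> (forall f, P f -> P (zpow_mul (-1) f)) ->
  (forall f, P f -> Hplus N f -> forall k j, f k j = C0) -> DEC N P pp hh ->
  0 < a -> (forall x, in_H N x -> bnd N x a -> bnd N (hh x) K0) ->
  (forall x, In x l -> (snd x <= N)%nat) -> forall f, Dset N P (rl l f).
Proof.
  intros HS HZ HU HD Ha Hb. induction l as [|x l IH]; intros Hl f.
  - apply D_zero; auto.
  - simpl. apply D_add; auto. apply D_scal; auto. apply D_shift; auto. apply ej_D with pp hh a K0; auto.
    apply Hl; simpl; auto. apply IH. intros y Hy; apply Hl; simpl; auto.
Qed.

Definition lst (L N : nat) : list (Z * nat) :=
  list_prod (map (fun i => (Z.of_nat i - Z.of_nat L)%Z) (seq 0 (2 * L + 1))) (seq 0 (S N)).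

Lemma lst_snd L N x : In x (lst L N) -> (snd x <= N)%nat.
Proof. destruct x as [k j]. unfold lst. rewrite in_prod_iff. intros [_ H]. apply in_seq in H. simpl; lia. Qed.

Lemma lst_memb L N k j : (Z.abs k <= Z.of_nat L)%Z -> (j <= N)%nat -> memb (k, j) (lst L N) = true.
Proof.
  intros Hk Hj. unfold memb. apply existsb_exists. exists (k, j). split.
  - unfold lst. apply in_prod. apply in_map_iff. exists (Z.to_nat (k + Z.of_nat L)). split. lia.
    apply in_seq. lia. apply in_seq. lia.
  - simpl. rewrite Z.eqb_refl, Nat.eqb_refl. auto.
Qed.

Lemma lst_memb2 L N k j : memb (k, j) (lst L N) = true -> (Z.abs k <= Z.of_nat L)%Z.
Proof.
  unfold memb. intros H. apply existsb_exists in H. destruct H as [[k' j'] [Hin He]].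
  simpl in He. apply Bool.andb_true_iff in He. destruct He as [E1 _]. apply Z.eqb_eq in E1. subst.
  unfold lst in Hin. apply in_prod_iff in Hin. destruct Hin as [Hin _]. apply in_map_iff in Hin.
  destruct Hin as [i [Hi Hs]]. apply in_seq in Hs. lia.
Qed.

Theorem lemmaA1 (N : nat) (P : seqC -> Prop) :
  is_subspace N P ->
  is_closed N P ->
  (forall f, P f -> P (zpow_mul (-1) f)) ->
  direct_sum_H N P ->
  dense_in_H N (fun g => exists (n : nat) (p : seqC), P p /\ g = zpow_mul (Z.of_nat n) p).
Proof.
  intros HS HC HZ [HU Hdec].
  assert (Hex : forall f, exists ph : seqC * seqC, in_H N f ->
     P (fst ph) /\ Hplus N (snd ph) /\ forall k j, f k j = Cadd (fst ph k j) (snd ph k j)).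
  { intros f. destruct (classic (in_H N f)) as [Hf|Hf].
    - destruct (Hdec f Hf) as [p [h Hph]]. exists (p, h). simpl; auto.
    - exists (vzero, vzero). intros; exfalso; auto. }
  pose (dec := fun f => proj1_sig (constructive_indefinite_description _ (Hex f))).
  assert (HD : DEC N P (fun f => fst (dec f)) (fun f => snd (dec f))).
  { intros f Hf. unfold dec. destruct (constructive_indefinite_description _ (Hex f)) as [ph Hph]. simpl. auto. }
  destruct (hh_bounded N P _ _ HS HC HU HD) as [a [K0 [Ha Hb]]].
  intros f Hf eps Heps.
  destruct Hf as [Hf0 [B HB]].
  destruct (tail_small N f B HB (eps * eps / 4)) as [L HL]. nra.
  assert (HDr : Dset N P (rl (lst L N) f)).
  { apply D_rl with (fun f => fst (dec f)) (fun f => snd (dec f)) a K0; auto. apply lst_snd. }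
  destruct (HDr (eps * eps / 4)) as [n [p [Hp Hnp]]]. nra.
  exists (zpow_mul (Z.of_nat n) p). split. exists n, p. auto.
  unfold dist_le. replace (eps * eps) with (2 * (eps * eps / 4) + 2 * (eps * eps / 4)) by field.
  apply bnd_sub_tri with (rl (lst L N) f); auto.
  apply bnd_ext with (tl L f); auto. intros k j. unfold tl, sub. rewrite rl_spec.
  destruct (Z.leb_spec (Z.abs k) (Z.of_nat L)).
  - destruct (le_lt_dec j N).
    + rewrite lst_memb by auto. unfold Cadd, Copp, C0. destruct (f k j). apply Ceq; simpl; ring.
    + rewrite (Hf0 k j) by auto. destruct (memb (k, j) (lst L N)); unfold Cadd, Copp, C0; apply Ceq; simpl; ring.
  - destruct (memb (k, j) (lst L N)) eqn:Em.
    + apply lst_memb2 in Em. lia.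
    + unfold Cadd, Copp, C0. destruct (f k j). apply Ceq; simpl; ring.
Qed.
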